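(* Let $G$ be a cubic graph. Suppose that for every vertex $x$ of $G$ there is a subgraph $H$ of $G$, all of whose vertices are far from $x$, with the following properties: (1) $H$ consists of two vertices $v,w$ together with three internally vertex-disjoint paths from $v$ to $w$; (2) each of these three paths has an even number of edges; (3) no two vertices of $H$ are joined by a short path in $G$ that uses no edge of $H$ (in particular $H$ is an induced subgraph); (4) each of the three paths is long. Then in the coloring game on $G$ with $3$ colors (A moving first), B has a winning strategy; consequently $\chi_g(G)=4$.
   Context: Coloring game: two players A and B alternately (A moves first) choose an uncolored vertex and assign it a color from $\{1,\dots,k\}$ keeping the partial coloring proper; A wins if all vertices get colored, B wins if some uncolored vertex has all $k$ colors among its neighbors; $\chi_g(G)$ is the least $k$ for which A has a winning strategy. Two vertices are close if they are joined by a path of length at most two (equivalently, their distance is at most 2); otherwise they are far apart. A path is short if some vertex on it is close to both of its endpoints; otherwise it is long. *)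

(* Defs.v *)
From mathcomp Require Import all_boot.
Set Implicit Arguments. Unset Strict Implicit. Unset Printing Implicit Defensive.

Section Graphs.
Variables (T : finType) (e : rel T).

Definition simple_graph : Prop := symmetric e /\ irreflexive e.

Definition cubic : Prop := forall x : T, #|[set y | e x y]| = 3.

Definition close (x y : T) : bool :=
  [|| x == y, e x y | [exists z, e x z && e z y]].

(* a :: q is a (simple) path in the graph from a to b *)
Definition spath (a b : T) (q : seq T) : bool :=
  [&& path e a q, last a q == b & uniq (a :: q)].

Definition short_path (a : T) (q : seq T) : bool :=
  has (fun z => close z a && close z (last a q)) (a :: q).

Definition pedge (s : seq T) (x y : T) : bool :=
  has (fun pr : T * T => ((pr.1 == x) && (pr.2 == y)) || ((pr.1 == y) && (pr.2 == x)))
      (zip s (behead s)).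

(* internal vertices of the path a :: q (q ends at the other endpoint) *)
Definition interior (q : seq T) : seq T := take (size q).-1 q.

Definition theta_ok (x v w : T) (p1 p2 p3 : seq T) : Prop :=
  let VH := v :: p1 ++ p2 ++ p3 in
  let Hedge := fun y z => [|| pedge (v :: p1) y z, pedge (v :: p2) y z
                            | pedge (v :: p3) y z] in
  [/\
      [/\ v != w, spath v w p1, spath v w p2, spath v w p3 & 
      [/\ all (fun z => z \notin interior p2) (interior p1),
          all (fun z => z \notin interior p3) (interior p1) &
          all (fun z => z \notin interior p3) (interior p2)]],
      [/\ ~~ odd (size p1), ~~ odd (size p2) & ~~ odd (size p3)],
      (forall (a b : T) (q : seq T), a \in VH -> b \in VH -> a != b ->
          spath a b q -> (forall y z, pedge (a :: q) y z -> ~~ Hedge y z) ->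
          ~~ short_path a q),
      [/\ ~~ short_path v p1, ~~ short_path v p2 & ~~ short_path v p3]
    &
      all (fun u => ~~ close x u) VH].

Section Game.
Variable k : nat.

Definition coloring := {ffun T -> option 'I_k}.

Definition empty_coloring : coloring := [ffun => None].

Definition legal (c : coloring) (v : T) (a : 'I_k) : bool :=
  (c v == None) && [forall u, e v u ==> (c u != Some a)].

Definition upd (c : coloring) (v : T) (a : 'I_k) : coloring :=
  [ffun u => if u == v then Some a else c u].

Definition complete (c : coloring) : bool := [forall v, c v != None].

Definition blocked (c : coloring) : bool :=
  [exists v, (c v == None) &&
     [forall a : 'I_k, [exists u, e v u && (c u == Some a)]]].

(* A_wins b c : A has a winning strategy from position c, where b = true
   means A is to move and b = false means B is to move. *)
Inductive A_wins : bool -> coloring -> Prop :=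
| AW_done b c : complete c -> A_wins b c
| AW_Amove c v a : ~~ blocked c -> legal c v a ->
    A_wins false (upd c v a) -> A_wins true c
| AW_Bmove c : ~~ blocked c ->
    (forall v a, legal c v a -> A_wins true (upd c v a)) -> A_wins false c.

Inductive B_wins : bool -> coloring -> Prop :=
| BW_blocked b c : blocked c -> B_wins b c
| BW_Amove c : ~~ complete c ->
    (forall v a, legal c v a -> B_wins false (upd c v a)) -> B_wins true c
| BW_Bmove c v a : legal c v a -> B_wins true (upd c v a) -> B_wins false c.

End Game.

Definition A_wins_game (k : nat) : Prop := @A_wins k true (empty_coloring k).
Definition B_wins_game (k : nat) : Prop := @B_wins k true (empty_coloring k).

Definition game_chromatic_number_is (n : nat) : Prop :=
  A_wins_game n /\ (forall j, j < n -> ~ A_wins_game j).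

End Graphs.

(* Main.v *)
Require Import Defs.
From mathcomp Require Import all_boot zify.
Set Implicit Arguments. Unset Strict Implicit. Unset Printing Implicit Defensive.


Definition o0 : 'I_3 := @Ordinal 3 0 isT.
Definition o1 : 'I_3 := @Ordinal 3 1 isT.
Definition o2 : 'I_3 := @Ordinal 3 2 isT.
Lemma ord3P (x : 'I_3) : [\/ x = o0, x = o1 | x = o2].
Proof.
case: x => [[|[|[|m]]] H] //.
- by constructor 1; apply: val_inj.
- by constructor 2; apply: val_inj.
- by constructor 3; apply: val_inj.
Qed.
Lemma third (a b : 'I_3) : a != b -> exists k : 'I_3,
  [/\ k != a, k != b & forall x, x != k -> x = a \/ x = b].
Proof.
case: (ord3P a) => ->; case: (ord3P b) => -> // _;
 [exists o2|exists o1|exists o2|exists o0|exists o1|exists o0];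
 (split => //; move=> x; case: (ord3P x) => -> //; auto).
Qed.
Lemma avoid (p1 p2 : option 'I_3) : exists b : 'I_3, Some b != p1 /\ Some b != p2.
Proof.
case: p1 => [a|]; case: p2 => [b|]; try (by exists o0);
 try (case: (ord3P a) => ->; by [exists o1|exists o0]);
 try (case: (ord3P b) => ->; by [exists o1|exists o0]).
case: (ord3P a) => ->; case: (ord3P b) => ->; by [exists o0|exists o1|exists o2].
Qed.

Section Game.
Variables (T : finType) (e : rel T).
Hypotheses (esym : symmetric e) (eirr : irreflexive e).
Variable k : nat.
Local Notation col := (coloring T k).

Lemma updE (c : col) v a u : upd c v a u = if u == v then Some a else c u.
Proof. by rewrite /upd ffunE. Qed.

Lemma upd_col (c : col) v a u : c u != None -> upd c v a u != None.
Proof. by rewrite updE; case: ifP. Qed.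

Lemma legal_None (c : col) v a : legal e c v a -> c v = None.
Proof. by case/andP=> /eqP. Qed.

Definition live (c : col) u y (kk : 'I_k) :=
  [/\ c u = None, c y = None, e u y,
      (forall a, a != kk -> exists z, e u z /\ c z = Some a) &
      (forall z, e y z -> c z != Some kk)].

Definition nb y p := (p == y) || e y p.

Lemma live_win c u y kk : live c u y kk -> B_wins e false c.
Proof.
case=> cu cy euy Hcol Hy.
apply: (@BW_Bmove _ _ _ c y kk).
  rewrite /legal cy eqxx /=; apply/forallP=> z; apply/implyP=> eyz; exact: Hy.
apply: BW_blocked; apply/existsP; exists u.
have uy : (u == y) = false by apply/negbTE; apply/eqP=> E; move: euy; rewrite E eirr.
rewrite updE uy cu eqxx /=; apply/forallP=> a.
case: (eqVneq a kk) => [->|akk].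
  by apply/existsP; exists y; rewrite euy updE eqxx /=; apply/eqP.
have [z [euz cz]] := Hcol a akk; apply/existsP; exists z; rewrite euz updE.
have -> : (z == y) = false by apply/negbTE; apply/eqP=> E; move: cz; rewrite E cy.
by rewrite cz; apply/eqP.
Qed.

Lemma live_upd c u y kk p a : live c u y kk -> c p = None -> ~~ nb y p ->
  live (upd c p a) u y kk.
Proof.
case=> cu cy euy Hcol Hy cp; rewrite /nb negb_or => /andP[py eyp].
have pu : (u == p) = false.
  by apply/negbTE; apply/eqP=> E; move: eyp; rewrite -E esym euy.
split=> //; first by rewrite updE pu.
- by rewrite updE eq_sym (negbTE py).
- move=> b /Hcol [z [euz cz]]; exists z; split=> //; rewrite updE.
  have -> : (z == p) = false by apply/negbTE; apply/eqP=> E; move: cz; rewrite E cp.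
  by [].
- move=> z eyz; rewrite updE.
  have -> : (z == p) = false by apply/negbTE; apply/eqP=> E; move: eyp; rewrite -E eyz.
  exact: Hy.
Qed.

Lemma single_threat c u y kk p a : live c u y kk -> legal e c p a -> ~~ nb y p ->
  B_wins e false (upd c p a).
Proof. by move=> L /legal_None cp np; apply: live_win (live_upd a L cp np). Qed.

Lemma double_threat c u1 y1 k1 u2 y2 k2 :
  live c u1 y1 k1 -> live c u2 y2 k2 -> (forall p, ~~ (nb y1 p && nb y2 p)) ->
  B_wins e true c.
Proof.
move=> L1 L2 D; apply: BW_Amove.
  apply/negP=> /forallP/(_ u1); by case: L1 => ->.
move=> p a lg; case n1: (nb y1 p).
  have n2 : ~~ nb y2 p by have := D p; rewrite n1.
  exact: single_threat L2 lg n2.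
by apply: single_threat L1 lg _; rewrite n1.
Qed.

Lemma A_B_excl b (c : col) : A_wins e b c -> B_wins e b c -> False.
Proof.
elim=> {b c}.
- move=> b c comp Bw; elim: Bw comp.
  + move=> b' c' bl comp; case/existsP: bl => v /andP[/eqP cv _].
    by move/forallP: comp => /(_ v); rewrite cv.
  + by move=> c' nc _ _ comp; rewrite comp in nc.
  + move=> c' v a lg _ IH comp; apply: IH.
    by apply/forallP=> u; apply: upd_col; move/forallP: comp.
- move=> c v a nbl lg _ IH Bw; inversion Bw; subst.
  + by rewrite H in nbl.
  + exact: IH (H0 v a lg).
- move=> c nbl _ IH Bw; inversion Bw; subst.
  + by rewrite H in nbl.
  + exact: IH H0.
Qed.

End Game.


Section Easy.
Variables (T : finType) (e : rel T).
Hypotheses (esym : symmetric e) (eirr : irreflexive e) (ecub : cubic e).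

Lemma count_colors k (c : coloring T k) v :
  (forall a : 'I_k, exists u, e v u && (c u == Some a)) -> k <= 3.
Proof.
move=> H.
pose f (a : 'I_k) := odflt v [pick u | e v u && (c u == Some a)].
have fP a : e v (f a) && (c (f a) == Some a).
  rewrite /f; case: pickP => [u //|/= H0]; have [u Hu] := H a; by rewrite H0 in Hu.
have finj : injective f.
  move=> a b E; have := fP a; have := fP b; rewrite E => /andP[_ /eqP->] /andP[_ /eqP].
  by case.
rewrite -(ecub v) -{1}(card_ord k) -(card_imset _ finj); apply: subset_leq_card.
apply/subsetP=> u /imsetP[a _ ->]; rewrite inE; by case/andP: (fP a).
Qed.

Lemma not_blocked4 (c : coloring T 4) : ~~ blocked e c.
Proof.
apply/negP=> /existsP[v /andP[_ /forallP H]].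
have : 4 <= 3; last by [].
apply: (count_colors (c := c) (v := v)) => a; exact/existsP/H.
Qed.

Lemma legal_exists4 (c : coloring T 4) v : c v = None -> exists a, legal e c v a.
Proof.
move=> cv; suff: [exists a, legal e c v a] by case/existsP=> a; exists a.
case: (boolP [exists a, legal e c v a]) => // /existsPn H; exfalso.
have : 4 <= 3; last by [].
apply: (count_colors (c := c) (v := v)) => a.
have := H a; rewrite /legal cv eqxx /= negb_forall => /existsP[u].
by rewrite negb_imply negbK => H1; exists u.
Qed.

Definition uncol k (c : coloring T k) := [set v | c v == None].

Lemma uncol_upd k (c : coloring T k) v a : c v = None ->
  #|uncol (upd c v a)| < #|uncol c|.
Proof.
move=> cv; apply: proper_card; apply/properP; split.
  apply/subsetP=> u; rewrite !inE updE; by case: ifP.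
by exists v; rewrite !inE ?updE ?eqxx ?cv.
Qed.

Lemma A4 n (c : coloring T 4) : #|uncol c| <= n -> A_wins e true c /\ A_wins e false c.
Proof.
elim: n c => [|n IH] c Hn.
  have comp : complete c.
    apply/forallP=> v; apply/negP=> /eqP cv.
    have : v \in uncol c by rewrite inE cv.
    by move: Hn; rewrite leqn0 => /eqP/cards0_eq->; rewrite inE.
  by split; apply: AW_done.
case: (boolP (complete c)) => [comp|nc]; first by split; apply: AW_done.
have [v cv] : exists v, c v = None.
  move: nc; rewrite negb_forall => /existsP[v]; rewrite negbK => /eqP; by exists v.
have [a lg] := legal_exists4 cv.
split.
  apply: (AW_Amove (not_blocked4 c) lg); apply: (proj2 (IH _ _)).
  by rewrite -ltnS; apply: leq_trans (uncol_upd a cv) Hn.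
apply: AW_Bmove; first exact: not_blocked4.
move=> u b lgu; apply: (proj1 (IH _ _)); rewrite -ltnS.
exact: leq_trans (uncol_upd b (legal_None lgu)) Hn.
Qed.

Lemma A_wins4 : A_wins_game e 4.
Proof. exact: (proj1 (A4 (leqnn _))). Qed.

Lemma nbr_exists v : exists u, e v u.
Proof.
have : 0 < #|[set u | e v u]| by rewrite ecub.
by rewrite card_gt0 => /set0Pn[u]; rewrite inE; exists u.
Qed.

Lemma nbr_exists2 v x : exists u, e v u && (u != x).
Proof.
have : 0 < #|[set u | e v u] :\ x|.
  have := cardsD1 x [set u | e v u]; rewrite ecub => H.
  by rewrite -(ltn_add2l (x \in [set u | e v u])) -H addn0; case: (_ \in _).
by rewrite card_gt0 => /set0Pn[u]; rewrite !inE => /andP[? ?]; exists u; apply/andP.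
Qed.

Hypothesis Tne : 0 < #|T|.

Lemma someT : exists v : T, true.
Proof. by case/card_gt0P: Tne => v _; exists v. Qed.

Lemma empty_not_complete k : ~~ complete (empty_coloring T k).
Proof.
have [v _] := someT; apply/negP=> /forallP/(_ v); by rewrite /empty_coloring ffunE.
Qed.

Lemma B0 : B_wins_game e 0.
Proof.
apply: BW_blocked; have [v _] := someT; apply/existsP; exists v.
rewrite /empty_coloring ffunE eqxx /=; apply/forallP; by case.
Qed.

Lemma B1 : B_wins_game e 1.
Proof.
apply: BW_Amove; first exact: empty_not_complete.
move=> x a lg; apply: BW_blocked; have [y exy] := nbr_exists x.
apply/existsP; exists y; rewrite updE.
have -> : (y == x) = false by apply/negbTE; apply/eqP=> E; move: exy; rewrite E eirr.
rewrite /empty_coloring ffunE eqxx /=; apply/forallP=> b; apply/existsP; exists x.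
rewrite esym exy updE eqxx /=; apply/eqP; congr Some; apply: val_inj.
by case: a {lg} b => [[]] // ? [[]].
Qed.

Lemma ord2P (a b : 'I_2) : a != b -> forall x, x = a \/ x = b.
Proof.
case: a b => [[|[|?]] ?] // [[|[|?]] ?] // _ [[|[|?]] ?] //;
 try (by left; apply: val_inj); by right; apply: val_inj.
Qed.

Lemma B2 : B_wins_game e 2.
Proof.
apply: BW_Amove; first exact: empty_not_complete.
move=> x a lg; have [z exz] := nbr_exists x.
have [y /andP[ezy yx]] := nbr_exists2 z x.
have [a' aa'] : exists a' : 'I_2, a != a'.
  case: a {lg} => [[|[|?]] ?] //; [exists (@Ordinal 2 1 isT)|exists (@Ordinal 2 0 isT)] => //.
have c1E u : upd (empty_coloring T 2) x a u = if u == x then Some a else None.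
  by rewrite updE /empty_coloring ffunE.
apply: (@BW_Bmove _ _ _ _ y a').
  rewrite /legal c1E (negbTE yx) eqxx /=; apply/forallP=> u; apply/implyP=> _.
  rewrite c1E; case: ifP => // _; by rewrite inj_eq; [|exact: Some_inj].
apply: BW_blocked; apply/existsP; exists z.
have zx : (z == x) = false by apply/negbTE; apply/eqP=> E; move: exz; rewrite E eirr.
have zy : (z == y) = false by apply/negbTE; apply/eqP=> E; move: ezy; rewrite E eirr.
rewrite updE zy c1E zx eqxx /=; apply/forallP=> b; apply/existsP.
case: (ord2P aa' b) => ->.
  have xy : (x == y) = false by rewrite eq_sym; apply/negbTE.
  by exists x; rewrite esym exz updE xy c1E eqxx /=; apply/eqP.
by exists y; rewrite ezy updE eqxx /=; apply/eqP.
Qed.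

End Easy.


Section Chain.
Variables (T : finType) (e : rel T).
Hypotheses (esym : symmetric e) (eirr : irreflexive e) (ecub : cubic e).
Variable P : T -> {set T}.

Lemma dj (A B : {set T}) x : [disjoint A & B] -> x \in A -> x \in B -> False.
Proof. by move=> D xA; rewrite (disjointFr D xA). Qed.

Lemma djn (A B : {set T}) x y : [disjoint A & B] -> x \in A -> y \in B -> x != y.
Proof. by move=> D xA yB; apply/eqP=> E; subst; exact: dj D xA yB. Qed.

Definition pend u := exists y, [/\ y \in P u, e u y & forall z, e y z -> z \in P u].

Fixpoint Zs (s : seq T) : {set T} :=
  match s with
  | u :: t :: s' => if s' is [::] then P u else P u :|: P t :|: Zs s'
  | _ => set0
  end.

Fixpoint chn (t0 : T) (s : seq T) {struct s} : Prop :=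
  match s with
  | u :: t :: s' => [/\ e t0 u, e u t, pend u, u \in P u &
       if s' is [::] then True else
       [/\ t \in P t, [disjoint P u :|: P t & Zs s'], [disjoint P u & P t],
           (size s' = 2 -> forall b, e t b -> b \in P u :|: P t :|: Zs s') & chn t s']]
  | _ => False
  end.

Lemma Zs_head u t s : P u \subset Zs [:: u, t & s].
Proof. by case: s => [|? ?] //=; rewrite -setUA subsetUl. Qed.

Lemma three_nbrs t a b : a != b -> e t a -> e t b ->
  exists o, forall z, e t z -> [\/ z = a, z = b | z = o].
Proof.
move=> ab eta etb.
have : #|[set z | e t z] :\ b :\ a| == 1.
  have H1 := cardsD1 b [set z | e t z]; have H2 := cardsD1 a ([set z | e t z] :\ b).
  move: H1 H2; rewrite ecub !inE ab eta etb /= => H1 H2.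
  by move: H1; rewrite H2 add1n add1n => [[->]].
case/cards1P=> o Ho; exists o => z etz.
case: (eqVneq z a) => [->|za]; first by constructor 1.
case: (eqVneq z b) => [->|zb]; first by constructor 2.
have : z \in [set z | e t z] :\ b :\ a by rewrite !inE za zb etz.
by rewrite Ho inE => /eqP ->; constructor 3.
Qed.

Lemma mk_live (c : coloring T 3) t0 u t y a0 b :
  c t0 = Some a0 -> a0 != b -> c t = None -> c u = None -> c y = None ->
  u != t -> y != t -> e u t0 -> e u t -> e u y ->
  (forall z, e y z -> z != t -> c z = None) ->
  exists kk, live e (upd c t b) u y kk.
Proof.
move=> ct0 a0b ct cu cy ut yt eut0 eut euy Hy.
have [kk [ka kb Hk]] := third a0b; exists kk; split => //.
- by rewrite updE (negbTE ut).
- by rewrite updE (negbTE yt).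
- move=> a /Hk [->|->].
    exists t0; split => //; rewrite updE.
    have -> : (t0 == t) = false by apply/negbTE/eqP=> E; move: ct0; rewrite E ct.
    by [].
  by exists t; rewrite updE eqxx.
- move=> z eyz; rewrite updE; case: ifP => [_|/negbT zt].
    by rewrite inj_eq; [rewrite eq_sym|exact: Some_inj].
  by rewrite (Hy z eyz zt).
Qed.

Lemma chain n s t0 (c : coloring T 3) : size s <= n -> 4 <= size s -> chn t0 s ->
  (forall z, z \in Zs s -> c z = None) -> c t0 != None -> c (last t0 s) != None ->
  B_wins e false c.
Proof.
elim: n s t0 c => [|n IH] [|u [|t s']] t0 c //= Hn H4 [e0u eut [y1 [y1P euy1 Hy1]] uP].
case: s' IH Hn H4 => [|u2 [|t2 s'']] // IH Hn _.
move=> [tP D1 D2 Hfin Hch] clean ct0 clast.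
have cl1 z : z \in P u -> c z = None by move=> zP; apply: clean; rewrite !inE zP.
have cl2 z : z \in P t -> c z = None by move=> zP; apply: clean; rewrite !inE zP orbT.
have cl3 z : z \in Zs [:: u2, t2 & s''] -> c z = None by move=> zP; apply: clean; rewrite !inE zP !orbT.
have u2P : u2 \in Zs [:: u2, t2 & s''].
  move: Hch => /= [_ _ _ u2P _]; exact: (subsetP (Zs_head _ _ _)).
have ut : u != t by apply: (djn D2 uP tP).
have y1t : y1 != t by apply: (djn D2 y1P tP).
have tZ : t \in P u :|: P t by rewrite !inE tP orbT.
have uZ : u \in P u :|: P t by rewrite !inE uP.
have uu2 : u != u2 by apply: (djn D1 uZ u2P).
have tu2 : t != u2 by apply: (djn D1 tZ u2P).
have [a0 ca0] : exists a0, c t0 = Some a0 by case: (c t0) ct0 => [a0|] //; exists a0.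
have ct : c t = None by apply: cl2.
have cu : c u = None by apply: cl1.
have cu2 : c u2 = None by apply: cl3.
case: s'' IH Hn Hfin Hch clean cl3 u2P D1 clast => [|u3 s3] IH Hn Hfin Hch clean cl3 u2P D1 clast.
-
  move: Hch => /= [etu2 eu2t2 [y2 [y2P euy2 Hy2]] u2P' _].
  have [a2 ca2] : exists a2, c t2 = Some a2 by case: (c t2) clast => [a2|] //; exists a2.
  have [b [b0 b2]] := avoid (c t0) (c t2).
  have a0b : a0 != b by move: b0; rewrite ca0 eq_sym inj_eq //; exact: Some_inj.
  have a2b : a2 != b by move: b2; rewrite ca2 eq_sym inj_eq //; exact: Some_inj.
  have lg : legal e c t b.
    rewrite /legal ct eqxx /=; apply/forallP=> z; apply/implyP=> etz.
    by rewrite (clean z (Hfin erefl z etz)).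
  apply: (BW_Bmove lg).
  have y2Z : y2 \in Zs [:: u2; t2] by [].
  have [k1 L1] : exists k1, live e (upd c t b) u y1 k1.
    apply: (mk_live ca0 a0b ct cu (cl1 _ y1P) ut y1t) => //; first by rewrite esym.
    by move=> z /Hy1 /cl1.
  have [k2 L2] : exists k2, live e (upd c t b) u2 y2 k2.
    apply: (mk_live ca2 a2b ct cu2 (cl3 _ y2Z)) => //.
    - by rewrite eq_sym.
    - by rewrite eq_sym; apply: (djn D1 tZ y2Z).
    - by rewrite esym.
    - by move=> z /Hy2 zP _; apply: cl3.
  apply: (double_threat esym eirr L1 L2) => p; apply/negP=> /andP[n1 n2].
  have pu : p \in P u by move: n1; rewrite /nb => /orP[/eqP->|/Hy1].
  have pu2 : p \in Zs [:: u2; t2] by move: n2; rewrite /nb => /orP[/eqP->|/Hy2].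
  have pZ : p \in P u :|: P t by rewrite inE pu.
  exact: (dj D1 pZ pu2).
-
  have etu2 : e t u2 by move: Hch => /= [->].
  have etu : e t u by rewrite esym.
  have [o Ho] := three_nbrs uu2 etu etu2.
  have [b [b0 bo]] := avoid (c t0) (c o).
  have a0b : a0 != b by move: b0; rewrite ca0 eq_sym inj_eq //; exact: Some_inj.
  have lg : legal e c t b.
    rewrite /legal ct eqxx /=; apply/forallP=> z; apply/implyP=> etz.
    by case: (Ho z etz) => ->; rewrite ?cu ?cu2 // eq_sym.
  apply: (BW_Bmove lg).
  have [k1 L1] : exists k1, live e (upd c t b) u y1 k1.
    apply: (mk_live ca0 a0b ct cu (cl1 _ y1P) ut y1t) => //; first by rewrite esym.
    by move=> z /Hy1 /cl1.
  apply: BW_Amove.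
    by apply/negP=> /forallP/(_ u); case: L1 => ->.
  move=> p a lgp; case n1: (nb e y1 p); last first.
    by apply: (single_threat esym eirr L1 lgp); rewrite n1.
  have pu : p \in P u by move: n1; rewrite /nb => /orP[/eqP->|/Hy1].
  have pZ : p \in P u :|: P t by rewrite inE pu.
  apply: (IH [:: u2, t2, u3 & s3] t).
  + by rewrite -ltnS; apply: leq_trans Hn.
  + move: Hch => /= [_ _ _ _ [_ _ _ _]].
    by case: (s3).
  + exact: Hch.
  + move=> z zZ; rewrite updE; case: ifP => [/eqP E|_].
      by subst; case: (dj D1 pZ zZ).
    rewrite updE; case: ifP => [/eqP E|_]; first by subst; case: (dj D1 tZ zZ).
    exact: cl3.
  + by apply: upd_col; rewrite updE eqxx.
  + by apply: upd_col; apply: upd_col.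
Qed.

Definition inner (s : seq T) := take (size s).-1 s.

Lemma inner_cons2 u t s : s != [::] -> inner [:: u, t & s] = [:: u, t & inner s].
Proof. by case: s => [|y s] //= _; rewrite /inner /=. Qed.

Lemma Zs_inner n s z : size s <= n -> z \in Zs s -> exists a, a \in inner s /\ z \in P a.
Proof.
elim: n s => [|n IH]; first by case=> [|? [|? ?]] //= _; rewrite inE.
case=> [|u [|t s]] //= Hn; rewrite ?inE //.
case: s IH Hn => [|u2 s] IH Hn.
  by move=> zP; exists u; rewrite /inner /= inE eqxx.
rewrite !inE -orbA => /or3P[zP|zP|/IH].
- by exists u; rewrite inner_cons2 // inE eqxx.
- by exists t; rewrite inner_cons2 // !inE eqxx orbT.
- case=> [|a [aI zP]]; first by rewrite -ltnS; apply: leq_trans Hn.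
  by exists a; rewrite inner_cons2 // !inE aI !orbT.
Qed.

Lemma build n d t0 s : size s <= n -> path e t0 s -> ~~ odd (size s) -> 2 <= size s ->
  uniq (inner s) ->
  (forall a b, a \in inner s -> b \in inner s -> a != b -> [disjoint P a & P b]) ->
  (forall a, a \in inner s -> a \in P a) ->
  (forall i, i < (size s).-1 -> ~~ odd i -> pend (nth d s i)) ->
  (4 <= size s -> forall b, e (nth d s (size s - 3)) b ->
     b \in P (nth d s (size s - 4)) :|: P (nth d s (size s - 3)) :|: P (nth d s (size s - 2))) ->
  chn t0 s.
Proof.
elim: n s t0 => [|n IH]; first by case=> [|? [|? ?]].
case=> [|u [|t s]] t0 //= Hn /and3P[e0u eut pth] ev _ un Dis Mem Pend Fin.
split => //; first by apply: (Pend 0).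
  by apply: Mem; rewrite /inner /= inE eqxx.
case: s IH Hn pth ev un Dis Mem Pend Fin => [|u2 s] // IH Hn pth ev un Dis Mem Pend Fin.
rewrite inner_cons2 // in un Dis Mem.
have tI : t \in [:: u, t & inner (u2 :: s)] by rewrite !inE eqxx orbT.
have uI : u \in [:: u, t & inner (u2 :: s)] by rewrite !inE eqxx.
move: (un) => /= /andP[]; rewrite inE negb_or => /andP[ut uin] /andP[tin un'].
split.
- by apply: Mem.
- rewrite -setI_eq0; apply/eqP/setP=> z; rewrite !inE.
  apply/negP=> /andP[zU zZ]; have [a [aI zP]] := @Zs_inner _ (u2 :: s) z (leqnn _) zZ.
  have aI' : a \in [:: u, t & inner (u2 :: s)] by rewrite !inE aI !orbT.
  case/orP: zU => zP'.
    have ua : u != a by apply/eqP=> E; move: uin; rewrite E aI.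
    by have := Dis _ _ uI aI' ua; rewrite -setI_eq0 => /eqP/setP/(_ z); rewrite !inE zP zP'.
  have ta : t != a by apply/eqP=> E; move: tin; rewrite E aI.
  by have := Dis _ _ tI aI' ta; rewrite -setI_eq0 => /eqP/setP/(_ z); rewrite !inE zP zP'.
- exact: Dis.
- case: s {IH Hn pth ev un Dis Mem Pend tI uI uin tin un'} Fin => [|t2 [|? ?]] // Fin _ b etb.
  exact: (Fin erefl b etb).
- have Hrec : chn t (u2 :: s); last exact: Hrec.
  apply: IH => //.
  + by rewrite -ltnS; apply: leq_trans Hn.
  + by move: ev; rewrite negbK.
  + by case: s {Hn pth Pend Fin un Dis Mem tI uI uin tin un'} ev.
  + by move=> a b aI bI; apply: Dis; rewrite !inE ?aI ?bI !orbT.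
  + by move=> a aI; apply: Mem; rewrite !inE aI !orbT.
  + move=> i Hi oi.
    have Hi2 : i.+2 < (size (u2 :: s)).+1 by move: Hi => /=; lia.
    have oi2 : ~~ odd i.+2 by rewrite /= negbK.
    exact: (Pend i.+2 Hi2 oi2).
  + move=> H4 b; have := Fin (leq_trans H4 (leq_trans (leqnSn _) (leqnSn _))) b.
    set k := size (u2 :: s).
    have E3 : k.+2 - 3 = (k - 3).+2 by lia.
    have E4 : k.+2 - 4 = (k - 4).+2 by lia.
    have E2 : k.+2 - 2 = (k - 2).+2 by lia.
    by rewrite E3 E4 E2.
Qed.

End Chain.


Section Gen.
Variables (T : finType) (e : rel T).
Hypotheses (esym : symmetric e) (eirr : irreflexive e).

Lemma pedge_cons (x y : T) l a b : pedge [:: x, y & l] a b =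
  (((x == a) && (y == b)) || ((x == b) && (y == a))) || pedge (y :: l) a b.
Proof. by []. Qed.

Lemma pedge_mem (s : seq T) a b : pedge s a b -> (a \in s) && (b \in s).
Proof.
elim: s => [|x [|y l] IH] //; rewrite pedge_cons => /orP[/orP[]|/IH].
- by case/andP=> /eqP-> /eqP->; rewrite !inE !eqxx orbT.
- by case/andP=> /eqP-> /eqP->; rewrite !inE !eqxx orbT.
- by case/andP=> ha hb; rewrite (in_cons x) ha (in_cons x) hb !orbT.
Qed.

Lemma pedgeC (s : seq T) a b : pedge s a b = pedge s b a.
Proof. by apply: eq_has => -[? ?] /=; rewrite orbC. Qed.

Lemma pedge_path (r : rel T) a s y z : path r a s -> pedge (a :: s) y z -> r y z || r z y.
Proof.
elim: s a => [|b s IH] a //= /andP[rab pth]; rewrite pedge_cons => /orP[/orP[]|].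
- by case/andP=> /eqP<- /eqP<-; rewrite rab.
- by case/andP=> /eqP<- /eqP<-; rewrite rab orbT.
- exact: IH.
Qed.

Lemma pedge_nbr (s : seq T) a b m d : uniq s -> m < size s -> nth d s m = a -> pedge s a b ->
  b = nth d s m.+1 \/ (0 < m /\ b = nth d s m.-1).
Proof.
elim: s m => [|x [|y l] IH] m //; rewrite pedge_cons => us ms nm /orP[/orP[]|].
- case/andP=> /eqP xa /eqP yb; left.
  have : nth d [:: x, y & l] m == nth d [:: x, y & l] 0 by rewrite nm xa.
  by rewrite nth_uniq // => /eqP->.
- case/andP=> /eqP xb /eqP ya; right.
  have : nth d [:: x, y & l] m == nth d [:: x, y & l] 1 by rewrite nm ya.
  by rewrite nth_uniq // => /eqP->.
- move=> pe; have /andP[ain _] := pedge_mem pe.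
  case: m ms nm => [|m] ms nm.
    by move: us => /= /andP[xl _]; move: nm => /= nm; subst; rewrite ain in xl.
  move: us => /andP[_ us].
  have [->|[m0 ->]] := IH m us ms nm pe; first by left.
  by right; split => //; case: m m0 {ms nm}.
Qed.

Lemma close_refl a : close e a a. Proof. by rewrite /close eqxx. Qed.
Lemma close_edge a b : e a b -> close e a b. Proof. by rewrite /close => ->; rewrite orbT. Qed.
Lemma close_two a m b : e a m -> e m b -> close e a b.
Proof. by move=> h1 h2; rewrite /close; apply/orP; right; apply/orP; right; apply/existsP; exists m; rewrite h1 h2. Qed.

Lemma short_small a q : path e a q -> 0 < size q <= 4 -> short_path e a q.
Proof.
rewrite /short_path.
case: q => [|x1 [|x2 [|x3 [|x4 [|x5 q]]]]] // pth _.
- apply/hasP; exists a; first exact: mem_head.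
  by rewrite close_refl close_edge //; case/andP: pth.
- apply/hasP; exists x1; first by rewrite !inE eqxx orbT.
  move: pth => /= /and3P[e1 e2 _].
  by rewrite close_edge ?close_edge // esym.
- apply/hasP; exists x1; first by rewrite !inE eqxx orbT.
  move: pth => /= /and4P[e1 e2 e3 _].
  by rewrite close_edge ?(close_two e2 e3) // esym.
- apply/hasP; exists x2; first by rewrite !inE eqxx !orbT.
  move: pth => /= /and5P[e1 e2 e3 e4 _].
  by rewrite (close_two e3 e4) (@close_two _ x1) // esym.
Qed.

End Gen.


Lemma arith_cyc1 a b : 2 < b ->
  [/\ a.+1 + b.+1 - 3 = a.+1 + (b - 2), a.+1 + b.+1 - 4 = a.+1 + (b - 3)
    & a.+1 + b.+1 - 2 = a.+1 + (b - 1)].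
Proof. move=> h; split; lia. Qed.
Lemma arith_cyc2 b : 2 < b -> [/\ b - 3 < b, b - 2 < b & b - 1 < b].
Proof. move=> h; split; lia. Qed.
Lemma arith_cyc3 b : 2 < b -> [/\ b - (b - 2).+1 = 1, b - (b - 3).+1 = 2 & b - (b - 1).+1 = 0].
Proof. move=> h; split; lia. Qed.

Section Theta.
Variables (T : finType) (e : rel T).
Hypotheses (esym : symmetric e) (eirr : irreflexive e) (ecub : cubic e).
Variables (x v w : T) (q1 q2 q3 : seq T).
Hypothesis Hth : theta_ok e x v w (rcons q1 w) (rcons q2 w) (rcons q3 w).

Definition VH := v :: rcons q1 w ++ rcons q2 w ++ rcons q3 w.
Definition Hedge y z := [|| pedge (v :: rcons q1 w) y z, pedge (v :: rcons q2 w) y z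
                          | pedge (v :: rcons q3 w) y z].
Definition NH y z := e y z && ~~ Hedge y z.

Lemma th3 a b q : a \in VH -> b \in VH -> a != b -> spath e a b q ->
  (forall y z, pedge (a :: q) y z -> ~~ Hedge y z) -> ~~ short_path e a q.
Proof. by case: Hth => _ _ H3 _ _; exact: H3. Qed.

Lemma HedgeC y z : Hedge y z = Hedge z y.
Proof. by rewrite /Hedge !(pedgeC _ y z). Qed.

Lemma NHC y z : NH y z = NH z y.
Proof. by rewrite /NH esym HedgeC. Qed.

Lemma Hedge_VH y z : Hedge y z -> y \in VH.
Proof.
rewrite /Hedge /VH => /or3P[] /pedge_mem /andP[+ _]; rewrite !inE ?mem_cat.
- by case/orP=> ->; rewrite ?orbT.
- by case/orP=> ->; rewrite ?orbT.
- by case/orP=> ->; rewrite ?orbT.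
Qed.

Lemma noP a b q : a \in VH -> b \in VH -> a != b -> path NH a q -> last a q = b ->
  size q <= 4 -> False.
Proof.
move=> aV bV ab pth; case: (shortenP pth) => p' pth' up' sub lq sq.
have sz : size p' <= 4.
  apply: leq_trans sq; apply: uniq_leq_size => //; by case/andP: up'.
have p0 : 0 < size p' by case: p' {pth' up' sub sz} lq => //= E; move: ab; rewrite E eqxx.
have pe : path e a p' by apply: sub_path pth' => y z /andP[].
have sh : short_path e a p' by apply: short_small => //; rewrite p0 sz.
suff : ~~ short_path e a p' by rewrite sh.
apply: (th3 aV bV ab); first by apply/and3P; split => //; rewrite lq.
move=> y z /(pedge_path pth') /orP[] /andP[_] //; by rewrite HedgeC.
Qed.

Definition qs := [:: q1; q2; q3].

Lemma interior_rcons (q : seq T) : interior (rcons q w) = q.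
Proof. by rewrite /interior size_rcons -cats1 take_size_cat. Qed.

Lemma qs_facts q : q \in qs ->
  [/\ path e v (rcons q w), uniq (v :: rcons q w), odd (size q), 3 <= size q &
      ~~ short_path e v (rcons q w)].
Proof.
case: Hth => [[vw s1 s2 s3 _] [o1 o2 o3] _ [l1 l2 l3] _].
rewrite !inE => /or3P[] /eqP->;
 [move: s1 o1 l1|move: s2 o2 l2|move: s3 o3 l3] => /and3P[pth _ un] o l;
 (split => //; [by move: o; rewrite size_rcons /= negbK|]);
 (case: (leqP 3 (size _)) => // Hs; move: l;
  rewrite short_small // size_rcons; apply/andP; split => //; by rewrite ltnS; apply: ltnW).
Qed.

Lemma VH_q q a : q \in qs -> a \in q -> a \in VH.
Proof.
rewrite /VH !inE => /or3P[] /eqP-> aq; rewrite !mem_cat !mem_rcons !inE aq !orbT //.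
Qed.

Lemma v_VH : v \in VH. Proof. by rewrite inE eqxx. Qed.
Lemma w_VH : w \in VH. Proof. by rewrite /VH inE mem_cat mem_rcons inE eqxx orbT. Qed.

Lemma qs_notvw q : q \in qs -> [/\ v \notin q, w \notin q, uniq q & v != w].
Proof.
move=> /qs_facts [_ un _ _ _]; move: un => /= /andP[]; rewrite mem_rcons inE negb_or.
by case/andP=> vw vq; rewrite rcons_uniq => /andP[-> ->]; rewrite vq.
Qed.

Lemma vw_neq : v != w.
Proof. by case: (qs_notvw (q := q1)); rewrite ?inE ?eqxx. Qed.

Lemma d_int : [/\ forall z, z \in q1 -> z \notin q2, forall z, z \in q1 -> z \notin q3 &
                 forall z, z \in q2 -> z \notin q3].
Proof.
case: Hth => [[_ _ _ _ [d12 d13 d23]] _ _ _ _]; rewrite !interior_rcons in d12 d13 d23.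
by split; [move: d12|move: d13|move: d23] => /allP.
Qed.

Lemma far u : u \in VH -> ~~ close e x u.
Proof. by case: Hth => _ _ _ _ /allP; apply. Qed.

Definition P a : {set T} := [set z | [|| z == a, NH a z | [exists m, NH a m && NH m z]]].

Lemma mem_P a : a \in P a. Proof. by rewrite inE eqxx. Qed.

Lemma ballP a z : z \in P a -> exists q, [/\ path NH a q, last a q = z & size q <= 2].
Proof.
rewrite inE => /or3P[/eqP->|h|/existsP[m /andP[h1 h2]]].
- by exists [::].
- by exists [:: z]; rewrite /= h.
- by exists [:: m; z]; rewrite /= h1 h2.
Qed.

Lemma ballP' a z : z \in P a -> exists q, [/\ path NH z q, last z q = a & size q <= 2].
Proof.
rewrite inE => /or3P[/eqP->|h|/existsP[m /andP[h1 h2]]].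
- by exists [::].
- by exists [:: a]; rewrite /= NHC h.
- by exists [:: m; a]; rewrite /= NHC h2 NHC h1.
Qed.

Lemma P_disj a b : a \in VH -> b \in VH -> a != b -> [disjoint P a & P b].
Proof.
move=> aV bV ab; rewrite -setI_eq0; apply/eqP/setP=> z; rewrite in_setI in_set0.
apply/negP=> /andP[za zb].
have [qa [pa la sa]] := ballP za; have [qb [pb lb sb]] := ballP' zb.
apply: (noP aV bV ab (q := qa ++ qb)).
- by rewrite cat_path pa la pb.
- by rewrite last_cat la lb.
- by rewrite size_cat; lia.
Qed.

Lemma NH_out a y : a \in VH -> NH a y -> y \notin VH.
Proof.
move=> aV h; apply/negP=> yV.
have ay : a != y by apply/eqP=> E; move: h; rewrite E /NH eirr.
by apply: (noP aV yV ay (q := [:: y])); rewrite //= h.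
Qed.

Lemma P_VH a b : a \in VH -> b \in VH -> b \in P a -> b = a.
Proof.
move=> aV bV bP; apply/eqP; apply/negPn/negP=> ba.
have := P_disj bV aV ba; rewrite -setI_eq0 => /eqP/setP/(_ b); by rewrite in_setI in_set0 bP mem_P.
Qed.

Lemma in_path a q : (a \in v :: rcons q w) = [|| a == v, a \in q | a == w].
Proof. by rewrite inE mem_rcons inE [(a == w) || _]orbC. Qed.

Lemma Hedge_int q a b : q \in qs -> a \in q -> Hedge a b -> pedge (v :: rcons q w) a b.
Proof.
move=> qin aq; have [vq wq _ _] := qs_notvw qin.
have av : (a == v) = false by apply/negbTE; apply/eqP=> E; move: vq; rewrite -E aq.
have aw : (a == w) = false by apply/negbTE; apply/eqP=> E; move: wq; rewrite -E aq.
have [d12 d13 d23] := d_int.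
have bad q' : a \notin q' -> pedge (v :: rcons q' w) a b = false.
  move=> aq'; apply/negbTE/negP=> /pedge_mem /andP[]; by rewrite in_path av aw (negbTE aq').
move: qin; rewrite !inE /Hedge => /or3P[] /eqP E; subst q.
- by rewrite (bad q2 (d12 _ aq)) (bad q3 (d13 _ aq)) !orbF; apply.
- have n1 : a \notin q1 by apply/negP=> /d12; rewrite aq.
  by rewrite (bad q1 n1) (bad q3 (d23 _ aq)) !orbF; apply.
- have n1 : a \notin q1 by apply/negP=> /d13; rewrite aq.
  have n2 : a \notin q2 by apply/negP=> /d23; rewrite aq.
  by rewrite (bad q1 n1) (bad q2 n2); apply.
Qed.

Lemma nbrs q r d b : q \in qs -> r < size q -> Hedge (nth d q r) b ->
  b = nth d (v :: rcons q w) r \/ b = nth d (v :: rcons q w) r.+2.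
Proof.
move=> qin rs H.
have aq : nth d q r \in q by apply: mem_nth.
have pe := Hedge_int qin aq H.
have [_ un _ _ _] := qs_facts qin.
have := pedge_nbr (m := r.+1) (d := d) un _ _ pe.
rewrite /= size_rcons ltnS ltnW // nth_rcons rs => /(_ isT erefl) [->|[_ ->]]; by auto.
Qed.

Lemma nbr_out3 t a b : exists y, [&& e t y, y != a & y != b].
Proof.
have : 0 < #|[set z | e t z] :\ a :\ b|.
  have H1 := cardsD1 a [set z | e t z]; have H2 := cardsD1 b ([set z | e t z] :\ a).
  rewrite ecub in H1; move: H1 H2; do 2 case: (_ \in _); move=> /= H1 H2; lia.
rewrite card_gt0 => /set0Pn[y]; rewrite !inE => /and3P[yb ya ety].
by exists y; rewrite ety ya yb.
Qed.

Definition Pz a : {set T} := if a == w then [set w] else P a.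

Lemma Pz_sub a : Pz a \subset P a.
Proof.
rewrite /Pz; case: ifP => [/eqP->|_]; last exact: subxx.
by rewrite sub1set mem_P.
Qed.

Lemma mem_Pz a : a \in Pz a.
Proof. by rewrite /Pz; case: ifP => [/eqP->|_]; rewrite ?inE ?eqxx ?mem_P. Qed.

Lemma Pz_disj a b : a \in VH -> b \in VH -> a != b -> [disjoint Pz a & Pz b].
Proof. move=> aV bV ab; exact: disjointW (Pz_sub a) (Pz_sub b) (P_disj aV bV ab). Qed.

Lemma pend_int q a : q \in qs -> a \in q -> pend e Pz a.
Proof.
move=> qin aq; have [vq wq _ _] := qs_notvw qin.
have aw : (a == w) = false by apply/negbTE; apply/eqP=> E; move: wq; rewrite -E aq.
have aV : a \in VH := VH_q qin aq.
pose r := index a q; have rs : r < size q by rewrite index_mem.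
have ar : nth a q r = a by rewrite nth_index.
have [y /and3P[ay y1 y2]] := nbr_out3 a (nth a (v :: rcons q w) r) (nth a (v :: rcons q w) r.+2).
have nh : NH a y.
  rewrite /NH ay /=; apply/negP=> H; rewrite -{1}ar in H.
  by case: (nbrs qin rs H) => E; [move: y1|move: y2]; rewrite E eqxx.
have yV := NH_out aV nh.
exists y; rewrite /Pz aw; split => //.
- by rewrite inE nh orbT.
- move=> z yz; rewrite inE; apply/orP; right; apply/orP; right; apply/existsP; exists y.
  rewrite nh /NH yz /=; apply/negP=> /Hedge_VH; by rewrite (negbTE yV).
Qed.

Lemma good_int q r d b : q \in qs -> r < size q -> e (nth d q r) b ->
  [\/ b = nth d (v :: rcons q w) r, b = nth d (v :: rcons q w) r.+2 | b \in P (nth d q r)].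
Proof.
move=> qin rs eb; case H: (Hedge (nth d q r) b).
  by case: (nbrs qin rs H) => ->; [constructor 1|constructor 2].
by constructor 3; rewrite inE /NH eb H orbT.
Qed.

Lemma path_chn qa : qa \in qs -> chn e Pz v (rcons qa w).
Proof.
move=> qin; have [pth un oq sq _] := qs_facts qin; have [vq wq uq _] := qs_notvw qin.
have inn : inner (rcons qa w) = qa by rewrite /inner size_rcons /= -cats1 take_size_cat.
apply: (build (n := size (rcons qa w)) (d := v)) => //; rewrite ?inn ?size_rcons //=.
- by rewrite negbK.
- by move: sq; set k := size qa => sq; lia.
- move=> a b aq bq ab; apply: Pz_disj => //; exact: VH_q qin _.
- move=> a _; exact: mem_Pz.
- move=> i Hi _; rewrite nth_rcons Hi; apply: pend_int qin _; exact: mem_nth.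
- move=> H4 b.
  have [i [E4 E3 E2 Hi]] : exists i, [/\ (size qa).+1 - 4 = i, (size qa).+1 - 3 = i.+1,
      (size qa).+1 - 2 = i.+2 & i.+2 < size qa].
    by exists (size qa - 3); move: sq; set k := size qa => sq; split; lia.
  rewrite E4 E3 E2 !nth_rcons (ltnW (ltnW Hi)) (ltnW Hi) Hi => eb.
  have Pzi j : j < size qa -> Pz (nth v qa j) = P (nth v qa j).
    move=> jl; rewrite /Pz; case: ifP => // /eqP E; move: wq; by rewrite -E mem_nth.
  have [->|->|bP] := good_int qin (ltnW Hi) eb.
  + by rewrite /= nth_rcons (ltnW (ltnW Hi)) !inE mem_Pz.
  + by rewrite /= nth_rcons Hi !inE mem_Pz !orbT.
  + have Hi1 : i.+1 < size qa := ltnW Hi. by rewrite !inE (Pzi _ Hi1) bP !orbT.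
Qed.

Lemma cycle_chn qa qb : qa \in qs -> qb \in qs -> (forall z, z \in qa -> z \notin qb) ->
  chn e Pz v (rcons qa w ++ rcons (rev qb) v).
Proof.
move=> qin qbin dab.
have [ptha una oqa sqa _] := qs_facts qin; have [vqa wqa uqa _] := qs_notvw qin.
have [pthb unb oqb sqb _] := qs_facts qbin; have [vqb wqb uqb _] := qs_notvw qbin.
set s := rcons qa w ++ rcons (rev qb) v.
have ss : size s = (size qa).+1 + (size qb).+1 by rewrite /s size_cat !size_rcons size_rev.
have inn : inner s = rcons qa w ++ rev qb.
  by rewrite /inner ss addnS /= /s -[rcons (rev qb) v]cats1 catA take_size_cat // size_cat size_rcons size_rev addSn.
have nthA i : i < size qa -> nth v s i = nth v qa i.
  by move=> il; rewrite /s nth_cat size_rcons ltnS ltnW // nth_rcons il.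
have nthB j : j < size qb -> nth v s ((size qa).+1 + j) = nth v qb (size qb - j.+1).
  move=> jl; rewrite /s nth_cat size_rcons ltnNge leq_addr /= addKn nth_rcons size_rev jl.
  by rewrite nth_rev.
apply: (build (n := size s) (d := v)) => //; rewrite ?inn ?ss.
- rewrite /s cat_path ptha last_rcons /=.
  have := rev_path e v (rcons qb w); rewrite last_rcons belast_rcons rev_cons => ->.
  by rewrite (eq_path (e' := e)) // => y z; rewrite esym.
- by rewrite addSn addnS /= oddD oqa oqb.
- by rewrite addSn addnS.
- rewrite cat_uniq rcons_uniq wqa uqa rev_uniq uqb /= andbT; apply/hasPn=> z.
  rewrite mem_rev mem_rcons inE => zb; apply/negP=> /orP[/eqP E|za].
    by move: wqb; rewrite -E zb.
  by move: (dab _ za); rewrite zb.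
- move=> a b aI bI ab; apply: Pz_disj => //.
  + move: aI; rewrite mem_cat mem_rcons inE mem_rev -orbA => /or3P[/eqP->|aq|aq];
      [exact: w_VH|exact: VH_q qin aq|exact: VH_q qbin aq].
  + move: bI; rewrite mem_cat mem_rcons inE mem_rev -orbA => /or3P[/eqP->|aq|aq];
      [exact: w_VH|exact: VH_q qin aq|exact: VH_q qbin aq].
- move=> a _; exact: mem_Pz.
- move=> i Hi oi.
  case: (ltnP i (size qa)) => [il|].
    by rewrite nthA //; apply: pend_int qin _; apply: mem_nth.
  rewrite leq_eqVlt => /orP[/eqP E|il].
    by move: oi; rewrite -E oqa.
  have Ej : i = (size qa).+1 + (i - (size qa).+1) by rewrite subnKC.
  set j := i - (size qa).+1 in Ej.
  have jl : j < size qb.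
    by move: Hi; rewrite Ej addnS /= ltn_add2l.
  rewrite Ej nthB //; apply: pend_int qbin _; apply: mem_nth.
  by rewrite ltn_subrL /=; apply: leq_ltn_trans jl.
- move=> H4 b.
  have [E3 E4 E2] := arith_cyc1 (size qa) sqb.
  have [l3 l2 l1] := arith_cyc2 sqb.
  have [F3 F4 F2] := arith_cyc3 sqb.
  rewrite E3 E4 E2 !nthB // F3 F4 F2 => eb.
  have q1l : 1 < size qb by apply: leq_trans sqb.
  have q2l : 2 < size qb by [].
  have [->|->|bP] := good_int qbin q1l eb.
  + by rewrite /= nth_rcons (ltnW q1l) !inE mem_Pz !orbT.
  + by rewrite /= nth_rcons q2l !inE mem_Pz.
  + have -> : Pz (nth v qb 1) = P (nth v qb 1).
      rewrite /Pz; case: ifP => // /eqP E; move: wqb; by rewrite -E mem_nth.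
    by rewrite !in_setU bP !orbT.
Qed.

End Theta.


Section ThetaGame.
Variables (T : finType) (e : rel T).
Hypotheses (esym : symmetric e) (eirr : irreflexive e) (ecub : cubic e).
Variables (x v w : T) (q1 q2 q3 : seq T).
Hypothesis Hth : theta_ok e x v w (rcons q1 w) (rcons q2 w) (rcons q3 w).

Local Notation VH := (VH v w q1 q2 q3).
Local Notation P := (P e v w q1 q2 q3).
Local Notation Pz := (Pz e v w q1 q2 q3).
Local Notation qs := (qs q1 q2 q3).

Lemma VHq q a : q \in qs -> a \in q -> a \in VH.
Proof. exact: (@VH_q T v w q1 q2 q3 q a). Qed.

Lemma x_notin_P a : a \in VH -> x \notin P a.
Proof.
move=> aV; have := far Hth aV; apply: contra; rewrite inE => /or3P[/eqP E|h|/existsP[m /andP[h1 h2]]].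
- by rewrite -E close_refl.
- by apply: close_edge; move: h => /andP[]; rewrite esym.
- by apply: (close_two (m := m)); [move: h2 => /andP[]; rewrite esym|move: h1 => /andP[]; rewrite esym].
Qed.

Lemma v_notin_P a : a \in VH -> a != v -> v \notin P a.
Proof.
move=> aV av; apply/negP=> vP; move: av; rewrite (P_VH esym Hth aV (v_VH v w q1 q2 q3) vP).
by rewrite eqxx.
Qed.

Lemma x_VH : x \notin VH.
Proof. by apply/negP=> xV; have := far Hth xV; rewrite close_refl. Qed.

Theorem theta_B_wins (a0 : 'I_3) : B_wins e false (upd (empty_coloring T 3) x a0).
Proof.
set c1 := upd _ x a0.
have c1E u : c1 u = if u == x then Some a0 else None by rewrite /c1 updE /empty_coloring ffunE.
have vV := v_VH v w q1 q2 q3; have wV := w_VH v w q1 q2 q3.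
have vx : (v == x) = false.
  by case: eqP => // Ex; move: x_VH; rewrite -Ex vV.
have wx : (w == x) = false.
  by case: eqP => // Ex; move: x_VH; rewrite -Ex wV.
have vw := vw_neq esym Hth.
have lgv : legal e c1 v o0.
  rewrite /legal c1E vx eqxx /=; apply/forallP=> u; apply/implyP=> evu.
  rewrite c1E; case: ifP => // /eqP E; subst u.
  by have := far Hth vV; rewrite close_edge // esym.
apply: (BW_Bmove lgv); set c2 := upd c1 v o0.
apply: BW_Amove.
  have wv : (w == v) = false by rewrite eq_sym; apply/negbTE.
  by apply/negP=> /forallP/(_ w); rewrite /c2 updE wv c1E wx.
move=> p a lgp; set c3 := upd c2 p a.
have c3E z : z != x -> z != v -> z != p -> c3 z = None.
  by move=> zx zv zp; rewrite /c3 /c2 !updE (negbTE zp) (negbTE zv) (negbTE zx) /empty_coloring ffunE.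
have cp : c2 p = None := legal_None lgp.
have pv : p != v by apply/eqP=> E; move: cp; rewrite E /c2 updE eqxx.
have cleanA (b : T) : b \in VH -> b != v -> p \notin Pz b -> forall z, z \in Pz b -> c3 z = None.
  move=> aV av pP z zP; have zP' : z \in P b := subsetP (Pz_sub e v w q1 q2 q3 b) z zP.
  apply: c3E.
  - by apply/eqP=> E; subst z; have := x_notin_P aV; rewrite zP'.
  - by apply/eqP=> E; subst z; have := v_notin_P aV av; rewrite zP'.
  - by apply/eqP=> E; subst z; move: pP; rewrite zP.
pose bad q := has (fun b => p \in Pz b) q.
have [d12 d13 d23] := d_int Hth.
have q1in : q1 \in qs by rewrite !inE eqxx.
have q2in : q2 \in qs by rewrite !inE eqxx orbT.
have q3in : q3 \in qs by rewrite !inE eqxx !orbT.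
have two_bad qi qj : qi \in qs -> qj \in qs -> (forall z, z \in qi -> z \notin qj) ->
    bad qi -> bad qj -> False.
  move=> qiin qjin dij /hasP[ai aiq pai] /hasP[aj ajq paj].
  have aij : ai != aj by apply/eqP=> E; move: (dij _ aiq); rewrite E ajq.
  have := Pz_disj esym Hth (VHq qiin aiq) (VHq qjin ajq) aij.
  by rewrite -setI_eq0 => /eqP/setP/(_ p); rewrite in_setI in_set0 pai paj.
have [qa [qb [qain qbin dab na nb]]] : exists qa qb, [/\ qa \in qs, qb \in qs,
    (forall z, z \in qa -> z \notin qb), ~~ bad qa & ~~ bad qb].
  case b1: (bad q1).
    have n2 : ~~ bad q2 by apply/negP=> b2; apply: (two_bad q1 q2).
    have n3 : ~~ bad q3 by apply/negP=> b3; apply: (two_bad q1 q3).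
    by exists q2, q3.
  case b2: (bad q2).
    have n3 : ~~ bad q3 by apply/negP=> b3; apply: (two_bad q2 q3).
    by exists q1, q3; rewrite b1.
  by exists q1, q2; rewrite b1 b2.
have [_ _ _ sqa _] := qs_facts esym Hth qain; have [vqa wqa _ _] := qs_notvw esym Hth qain.
have [_ _ _ sqb _] := qs_facts esym Hth qbin; have [vqb wqb _ _] := qs_notvw esym Hth qbin.
have cleanq q (b : T) : q \in qs -> ~~ bad q -> b \in q -> forall z, z \in Pz b -> c3 z = None.
  move=> qin nq aq; have [vq _ _ _] := qs_notvw esym Hth qin.
  apply: cleanA; first exact: VHq qin aq.
    by apply/eqP=> E; move: vq; rewrite -E aq.
  by apply/negP=> pa; move: nq; rewrite /bad; apply/negP/negPn/hasP; exists b.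
have c3v : c3 v != None by apply: upd_col; rewrite /c2 updE eqxx.
case: (eqVneq p w) => [pw|pw].
-
  have Hc := path_chn esym eirr ecub Hth qain.
  apply: (chain esym eirr ecub (n := size (rcons qa w)) (leqnn _) _ Hc) => //.
  + by rewrite size_rcons ltnS.
  + move=> z /(Zs_inner (leqnn _)) [a' [aI zP]].
    have inn : inner (rcons qa w) = qa by rewrite /inner size_rcons /= -cats1 take_size_cat.
    rewrite inn in aI; exact: cleanq qain na aI _ zP.
  + by rewrite last_rcons /c3 updE -pw eqxx.
- have Hc := cycle_chn esym eirr ecub Hth qain qbin dab.
  set s := rcons qa w ++ rcons (rev qb) v in Hc *.
  have ss : size s = (size qa).+1 + (size qb).+1 by rewrite /s size_cat !size_rcons size_rev.
  apply: (chain esym eirr ecub (n := size s) (leqnn _) _ Hc) => //.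
  + by rewrite ss addSn ltnS; apply: leq_trans sqa (leq_addr _ _).
  + move=> z /(Zs_inner (leqnn _)) [a' [aI zP]].
    have inn : inner s = rcons qa w ++ rev qb.
      by rewrite /inner ss addnS /= /s -[rcons (rev qb) v]cats1 catA take_size_cat // size_cat size_rcons size_rev addSn.
    move: aI; rewrite inn mem_cat mem_rcons inE mem_rev -orbA => /or3P[/eqP E|aq|aq].
    * subst a'; move: zP; rewrite /Pz eqxx inE => /eqP->.
      by apply: c3E; rewrite ?wx ?vw // eq_sym.
    * exact: cleanq qain na aq _ zP.
    * exact: cleanq qbin nb aq _ zP.
  + by rewrite /s last_cat last_rcons.
Qed.

End ThetaGame.


Lemma spath_rcons (T : finType) (e : rel T) v w p : v != w -> spath e v w p -> exists q, p = rcons q w.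
Proof.
move=> vw /and3P[_ /eqP lw _]; case: p lw => [|y p] /= lw.
  by move: vw; rewrite lw eqxx.
by exists (belast y p); rewrite -lw -lastI.
Qed.

Unset Implicit Arguments.
Theorem mainTheorem12 (T : finType) (e : rel T) :
  0 < #|T| -> simple_graph e -> cubic e ->
  (forall x : T, exists (v w : T) (p1 p2 p3 : seq T), theta_ok e x v w p1 p2 p3) ->
  B_wins_game e 3 /\ game_chromatic_number_is e 4.
Proof.
move=> Tne [esym eirr] ecub Hx.
have B3 : B_wins_game e 3.
  apply: BW_Amove; first exact: empty_not_complete.
  move=> x a0 _; have [v [w [p1 [p2 [p3 Hth]]]]] := Hx x.
  have [[vw s1 s2 s3 _] _ _ _ _] := Hth.
  have [q1 E1] := @spath_rcons _ e _ _ _ vw s1; have [q2 E2] := @spath_rcons _ e _ _ _ vw s2.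
  have [q3 E3] := @spath_rcons _ e _ _ _ vw s3.
  subst p1 p2 p3; exact: (theta_B_wins esym eirr ecub Hth).
split => //; split; first exact: A_wins4.
case=> [|[|[|[|j]]]] // _ HA; apply: (A_B_excl HA).
- exact: B0.
- exact: B1.
- exact: B2.
- exact: B3.
Qed.
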